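(* In the setting below, the group $G_M$ is isomorphic to the semi-direct product $\mathbb Z\ltimes\mathbb Z^{2n+1}$ associated with the action of $\mathbb Z$ on $\mathbb Z^{2n+1}$ in which a generator $t$ of $\mathbb Z$ acts by $t\cdot v=M^\top v$.
   Context: Let $n\ge 1$ and let $M=(m_{ij})\in SL(2n+1,\mathbb Z)$. Assume that $M$ has exactly one real eigenvalue $\alpha$, that $\alpha>0$, $\alpha\neq 1$, that $\alpha$ is a simple eigenvalue, and that the remaining eigenvalues are $\beta_1,\dots,\beta_k,\bar\beta_1,\dots,\bar\beta_k$ with $\mathrm{Im}\,\beta_j>0$. Let $W\subset\mathbb C^{2n+1}$ be the direct sum of the generalized eigenspaces of $M$ for $\beta_1,\dots,\beta_k$ (so $\dim_{\mathbb C}W=n$). Fix a real eigenvector $a=(a^{(1)},\dots,a^{(2n+1)})^\top\in\mathbb R^{2n+1}$ of $M$ for $\alpha$ and a basis $b_1,\dots,b_n$ of $W$, $b_j=(b_j^{(1)},\dots,b_j^{(2n+1)})^\top$, and let $R=(r_{\ell j})\in M_n(\mathbb C)$ be given by $Mb_j=\sum_{\ell=1}^n r_{\ell j}b_\ell$. For $i=1,\dots,2n+1$ put $u_i=(a^{(i)},b_1^{(i)},\dots,b_n^{(i)})^\top\in\mathbb R\times\mathbb C^n$. Let $\mathbb H=\{w\in\mathbb C:\mathrm{Im}\,w>0\}$, and define holomorphic automorphisms of $\mathbb H\times\mathbb C^n$ by $g_0(w,z)=(\alpha w,R^\top z)$ and $g_i(w,z)=(w,z)+u_i$ for $1\le i\le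 2n+1$. Let $G_M$ be the group generated by $g_0,\dots,g_{2n+1}$. *)

(* Defs.v *)
From HB Require Import structures.
From mathcomp Require Import all_boot all_order all_algebra.
From mathcomp Require Import complex.
From mathcomp Require Import reals.
Set Implicit Arguments. Unset Strict Implicit. Unset Printing Implicit Defensive.
Import Order.TTheory GRing.Theory Num.Theory.
Local Open Scope ring_scope.
Local Open Scope complex_scope.

Section GM.
Variable R : realType.
Local Notation C := R[i].

Definition HC (n : nat) := {p : C * 'cV[C]_n | 0 < complex.Im p.1}.

Lemma HC_scale_proof n (alpha : R) (Rm : 'M[C]_n) (p : HC n) :
  0 < alpha -> 0 < complex.Im ((alpha%:C * (val p).1, Rm *m (val p).2).1).
Proof.
case: p => [[[x y] z] /= hy] ha.
rewrite /=; rewrite ?mul0r ?subr0 ?addr0 ?add0r ?mulr0; by apply: mulr_gt0.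
Qed.

(* g_0 (w, z) = (alpha w, Rm z)   (Rm will be R^T). *)
Definition g_scale n (alpha : R) (ha : 0 < alpha) (Rm : 'M[C]_n) (p : HC n)
  : HC n :=
  exist _ (alpha%:C * (val p).1, Rm *m (val p).2) (HC_scale_proof Rm p ha).

Lemma HC_transl_proof n (a : R) (c : 'cV[C]_n) (p : HC n) :
  0 < complex.Im (((val p).1 + a%:C, (val p).2 + c).1).
Proof. by case: p => [[[x y] z] /= hy]; rewrite addr0. Qed.

Definition g_transl n (a : R) (c : 'cV[C]_n) (p : HC n) : HC n :=
  exist _ ((val p).1 + a%:C, (val p).2 + c) (HC_transl_proof a c p).

End GM.

(* The subgroup of the group of bijections of T generated by a set S of
   bijections: all finite compositions of elements of S and of their
   inverses (group law = composition, identity = id). *)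
Inductive gen_group (T : Type) (S : (T -> T) -> Prop) : (T -> T) -> Prop :=
| gen_id : gen_group S id
| gen_mul (g f : T -> T) : S g -> gen_group S f -> gen_group S (g \o f)
| gen_inv (g h f : T -> T) : S g -> cancel g h -> cancel h g ->
    gen_group S f -> gen_group S (h \o f).

Definition gen_eigvec (F : fieldType) (m : nat) (A : 'M[F]_m) (beta : F)
  (v : 'cV[F]_m) : bool :=
  ((A - beta%:M) ^+ m) *m v == 0.

(* W = sum of the generalized eigenspaces of A for the eigenvalues beta
   with Im beta > 0 (non-eigenvalues contribute the zero space). *)
Definition in_W (R : realType) (m : nat) (A : 'M[R[i]]_m) (v : 'cV[R[i]]_m)
  : Prop :=
  exists s : seq (R[i] * 'cV[R[i]]_m),
    all (fun p => (0 < complex.Im p.1) && gen_eigvec A p.1 p.2) s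
    /\ v = \sum_(p <- s) p.2.

(* Semidirect product  Z |x Z^(m+1)  with t . v = M^T v :
   (k, v) * (l, w) = (k + l, v + (M^T)^k w). *)
Definition sdp_mul (m : nat) (M : 'M[int]_m.+1)
  (x y : int * 'cV[int]_m.+1) : int * 'cV[int]_m.+1 :=
  (x.1 + y.1, x.2 + (M^T ^ x.1) *m y.2).

(* Main.v *)
Require Import Defs.
From HB Require Import structures.
From mathcomp Require Import all_boot all_order all_algebra.
From mathcomp Require Import complex.
From mathcomp Require Import reals.
From Stdlib Require Import FunctionalExtensionality.
From mathcomp Require Import zify ring.
Set Implicit Arguments. Unset Strict Implicit. Unset Printing Implicit Defensive.
Import Order.TTheory GRing.Theory Num.Theory.
Local Open Scope ring_scope.
Local Open Scope complex_scope.
Lemma trmxXn (F : comNzRingType) m (X : 'M[F]_m.+1) k : (X ^+ k)^T = X^T ^+ k.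
Proof.
elim: k => [|k IH]; first by rewrite !expr0 trmx1.
by rewrite exprS exprSr -!mulmxE trmx_mul IH.
Qed.

Lemma char_poly_tr (F : comNzRingType) m (X : 'M[F]_m) : char_poly X^T = char_poly X.
Proof.
rewrite /char_poly -det_tr; congr (\det _).
by apply/matrixP=> i j; rewrite !mxE eq_sym.
Qed.

Lemma geig_tr (F : fieldType) m (X : 'M[F]_m.+1) b (v : 'cV[F]_m.+1) :
  (v^T <= geigenspace X^T b)%MS = gen_eigvec X b v.
Proof.
have E : ((X - b%:M) ^+ m.+1)^T = (X^T - b%:M) ^+ m.+1.
  by rewrite trmxXn linearB /= tr_scalar_mx.
rewrite geigenspaceE /gen_eigvec; apply/sub_kermxP/eqP => H.
  by rewrite -[_ *m v]trmxK trmx_mul E H trmx0.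
by rewrite -E -trmx_mul H trmx0.
Qed.

Lemma geig_nonroot (F : fieldType) m (X : 'M[F]_m.+1) b :
  ~~ root (char_poly X) b -> geigenspace X b = 0.
Proof.
move=> nr.
have cp : coprimep (('X - b%:P) ^+ m.+1) (char_poly X).
  by rewrite coprimep_expl // coprimep_sym coprimep_XsubC.
have H := mxdirect_kermxpoly X cp.
have E : kermxpoly X (char_poly X) = kermx (0 : 'M[F]_m.+1).
  by rewrite /kermxpoly /= Cayley_Hamilton.
rewrite E in H; apply/eqP; rewrite -submx0 -H.
by rewrite sub_capmx submx_refl /= kermx0 submx1.
Qed.
Section Spectral.
Variables (R : realType) (n : nat) (M : 'M[int]_(n.*2.+1)) (alpha : R).
Variables (B : 'M[R[i]]_(n.*2.+1, n)) (aC : 'cV[R[i]]_(n.*2.+1)).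
Local Notation C := R[i].
Local Notation N := n.*2.+1.
Let MC := map_mx (fun x : int => (x%:~R : C)) M.
Let A := MC^T.
Hypothesis hreal : forall z : C, root (char_poly MC) z -> complex.Im z = 0 -> z = alpha%:C.
Hypothesis haC : aC != 0.
Hypothesis hMa : MC *m aC = alpha%:C *: aC.
Hypothesis hBW : forall j, in_W MC (col j B).
Hypothesis hBinj : forall c : 'cV[C]_n, B *m c = 0 -> c = 0.
Hypothesis hWB : forall v, in_W MC v -> exists c, v = B *m c.

Local Notation cj := (map_mx (@conjc R)).

Lemma cjK m p (X : 'M[C]_(m, p)) : cj (cj X) = X.
Proof. by apply/matrixP => i j; rewrite !mxE conjcK. Qed.

Lemma A_real : cj A = A.
Proof. by apply/matrixP => i j; rewrite !mxE rmorph_int. Qed.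

Lemma posW b m (X : 'M[C]_(m, N)) : 0 < complex.Im b ->
  (X <= geigenspace A b)%MS -> (X <= B^T)%MS.
Proof.
move=> hb hX; apply/row_subP => j.
have hj : ((row j X)^T^T <= geigenspace A b)%MS.
  by rewrite trmxK; apply: submx_trans hX; apply: row_sub.
rewrite geig_tr in hj.
have [c hc] : exists c, (row j X)^T = B *m c.
  apply: hWB; exists [:: (b, (row j X)^T)]; split; last by rewrite big_seq1.
  by rewrite /= hb hj.
by rewrite -[row j X]trmxK hc trmx_mul submxMl.
Qed.

Lemma conjG b m (X : 'M[C]_(m, N)) :
  (X <= geigenspace A b)%MS -> (cj X <= geigenspace A (conjc b))%MS.
Proof.
move=> hX.
have -> : geigenspace A (conjc b) = cj (geigenspace A b).
  by rewrite map_geigenspace A_real.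
by rewrite map_submx.
Qed.

Lemma Im_conj (z : C) : complex.Im (conjc z) = - complex.Im z.
Proof. by case: z. Qed.

Lemma negW b m (X : 'M[C]_(m, N)) : complex.Im b < 0 ->
  (X <= geigenspace A b)%MS -> (X <= cj B^T)%MS.
Proof.
move=> hb hX; rewrite -[X]cjK map_submx.
apply: (@posW (conjc b)); last exact: conjG.
by rewrite Im_conj oppr_gt0.
Qed.

Let rs := sval (closed_field_poly_normal (char_poly A)).
Let drs := undup rs.
Let r_ (i : 'I_(size drs)) := drs`_i.
Let G (i : 'I_(size drs)) := geigenspace A (r_ i).

Lemma chiA : char_poly A = \prod_(z <- rs) ('X - z%:P).
Proof.
rewrite /rs; case: (closed_field_poly_normal _) => s /= hs.
by rewrite {1}hs (monicP (char_poly_monic _)) scale1r.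
Qed.

Lemma root_chiA z : root (char_poly A) z = (z \in drs).
Proof. by rewrite chiA root_prod_XsubC mem_undup. Qed.

Lemma toSum (P : pred C) b m (X : 'M[C]_(m, N)) : P b ->
  (X <= geigenspace A b)%MS -> (X <= \sum_(i | P (r_ i)) G i)%MS.
Proof.
move=> Pb hX; case: (boolP (root (char_poly A) b)) => hr.
  rewrite root_chiA -index_mem in hr.
  have e : r_ (Ordinal hr) = b by rewrite /r_ /= nth_index // -index_mem.
  by apply: (sumsmx_sup (Ordinal hr)); rewrite /G e.
move: hX; rewrite geig_nonroot // => /submx0null ->; exact: sub0mx.
Qed.

Lemma BT_pos : (B^T <= \sum_(i | (0 < complex.Im (r_ i))%R) G i)%MS.
Proof.
apply/row_subP => j; rewrite -tr_col; have [s [hs ->]] := hBW j.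
rewrite raddf_sum /= big_seq; apply: summx_sub => p hp.
have /andP[h1 h2] := allP hs p hp.
apply: (@toSum (fun z => 0 < complex.Im z) p.1) => //.
by rewrite geig_tr.
Qed.

Lemma BT_neg : (cj B^T <= \sum_(i | (~~ (0 < complex.Im (r_ i)) && (complex.Im (r_ i) < 0))%R) G i)%MS.
Proof.
apply/row_subP => j; rewrite -map_row -tr_col; have [s [hs ->]] := hBW j.
rewrite raddf_sum /= map_mx_sum big_seq; apply: summx_sub => p hp.
have /andP[h1 h2] := allP hs p hp.
apply: (@toSum (fun z => ~~ (0 < complex.Im z) && (complex.Im z < 0)) (conjc p.1)).
  by rewrite /= Im_conj oppr_gt0 ltNge ltW ?oppr_lt0 //= oppr_lt0.
by apply: conjG; rewrite geig_tr.
Qed.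

Lemma rankBT : \rank B^T = n.
Proof.
apply/eqP; rewrite -/(row_free B^T) -kermx_eq0; apply/rowV0P => x /sub_kermxP hx.
rewrite -[x]trmxK (hBinj (c := x^T)) ?trmx0 //.
by rewrite -[B *m _]trmxK trmx_mul trmxK hx trmx0.
Qed.

Lemma rankcBT : \rank (cj B^T) = n.
Proof. by rewrite mxrank_map rankBT. Qed.

Lemma r_inj : {in predT &, injective r_}.
Proof.
move=> i j _ _ /eqP; rewrite /r_ nth_uniq ?undup_uniq // => /eqP; exact: val_inj.
Qed.

Lemma Gdirect : mxdirect (\sum_i G i).
Proof. exact: mxdirect_sum_geigenspace r_inj. Qed.

Lemma arith3 (a b c x k : nat) : (k <= a -> k <= b -> x <= c -> a + (b + c) <= k.*2.+1 -> x <= 1)%N.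
Proof. have := addnn k; lia. Qed.

Lemma zero_rank i : complex.Im (r_ i) = 0 -> (\rank (G i) <= 1)%N.
Proof.
move=> hi.
have hd := Gdirect; rewrite mxdirectE /= in hd.
have h1 : (\sum_i \rank (G i) <= N)%N by rewrite -(eqP hd) rank_leq_col.
rewrite (bigID (fun i => (0 < complex.Im (r_ i))%R)) /= in h1.
rewrite (bigID (fun i => (complex.Im (r_ i) < 0)%R) (fun i => ~~ (0 < complex.Im (r_ i))%R)) /= in h1.
have hp : (n <= \sum_(i | (0 < complex.Im (r_ i))%R) \rank (G i))%N.
  rewrite -{1}rankBT; apply: leq_trans (mxrankS BT_pos) _.
  exact: (mxrank_sum_leqif _).1.
have hn : (n <= \sum_(i | ~~ (0 < complex.Im (r_ i))%R && (complex.Im (r_ i) < 0)%R) \rank (G i))%N.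
  rewrite -{1}rankcBT; apply: leq_trans (mxrankS BT_neg) _.
  exact: (mxrank_sum_leqif _).1.
have hz : (\rank (G i) <= \sum_(i | ~~ (0 < complex.Im (r_ i))%R && ~~ (complex.Im (r_ i) < 0)%R) \rank (G i))%N.
  by rewrite (bigD1 i) /= ?hi ?ltxx //= leq_addr.
exact: (arith3 hp hn hz h1).
Qed.

Lemma G_alpha i : complex.Im (r_ i) = 0 -> (G i <= aC^T)%MS.
Proof.
move=> hi.
have e : r_ i = alpha%:C.
  apply: hreal => //; rewrite -(char_poly_tr MC) -/A root_chiA; exact: mem_nth.
have haT : (aC^T <= G i)%MS.
  rewrite /G e geig_tr /gen_eigvec exprSr -mulmxE -mulmxA mulmxBl hMa.
  by rewrite mul_scalar_mx subrr mulmx0.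
have [le eq] := mxrank_leqif_sup haT.
rewrite -eq eqn_leq le /=.
have -> : \rank aC^T = 1%N by rewrite rank_rV trmx_eq0 haC.
exact: zero_rank.
Qed.

Lemma iterop_exp (F : comNzRingType) k (x : F) : iterop k *%R x 1 = x ^+ k.
Proof.
case: k => // k; rewrite iteropS; elim: k => // k IH; by rewrite iterS IH exprS.
Qed.

Lemma size_rs : size rs = N.
Proof.
have := size_char_poly A; rewrite chiA size_prod_XsubC; by case.
Qed.

Lemma Gwhole : (1%:M <= \sum_i G i)%MS.
Proof.
pose Q := \prod_(i < size drs) ('X - (r_ i)%:P) ^+ N.
have hQ : char_poly A %| Q.
  rewrite chiA -big_undup_iterop_count (big_nth 0) big_mkord /Q.
  apply: (big_ind2 (fun p q => p %| q)) => [|x1 x2 y1 y2 h1 h2|j _].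
  - exact: dvdpp.
  - exact: dvdp_mul.
  - rewrite iterop_exp; apply: dvdp_exp2l; rewrite -size_rs; exact: count_size.
have k1 := kermxpoly_min (dvdp_trans (mxminpoly_dvd_char A) hQ).
have cp : {in predT &, forall i j, j != i ->
    coprimep (('X - (r_ i)%:P) ^+ N) (('X - (r_ j)%:P) ^+ N)}.
  move=> i j _ _ Nji.
  rewrite coprimep_expr ?coprimep_expl// coprimep_XsubC root_XsubC.
  by apply: contra Nji => /eqP /r_inj -> //.
have k2 := kermxpoly_prod A cp.
move/eqmxP: k1 => /andP[_ h1].
move/eqmxP: k2 => /andP[h2 _].
exact: submx_trans h1 h2.
Qed.

Lemma key (d : 'cV[C]_N) : cj d = d -> aC^T *m d = 0 -> B^T *m d = 0 -> d = 0.
Proof.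
move=> hd ha hb.
have hK : forall i, (G i <= kermx d)%MS.
  move=> i; case: (ltrgtP (complex.Im (r_ i)) 0) => hi.
  - apply: submx_trans (negW hi (submx_refl _)) _.
    by apply/sub_kermxP; rewrite -hd -map_mxM hb map_mx0.
  - apply: submx_trans (posW hi (submx_refl _)) _.
    by apply/sub_kermxP; rewrite hb.
  - apply: submx_trans (G_alpha hi) _.
    by apply/sub_kermxP; rewrite ha.
have hS : (\sum_i G i <= kermx d)%MS by apply/sumsmx_subP => i _; exact: hK.
have := submx_trans Gwhole hS.
by move/sub_kermxP; rewrite mul1mx.
Qed.
End Spectral.
Section Group.
Variables (R : realType) (n : nat).
Local Notation C := R[i].
Local Notation N := (n.+1).*2.+1.
Variables (M : 'M[int]_N) (alpha : R) (a : 'cV[R]_N).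
Variables (B : 'M[C]_(N, n.+1)) (Rm : 'M[C]_n.+1) (halpha : 0 < alpha).
Let MC := map_mx (fun x : int => (x%:~R : C)) M.
Hypothesis hdet : \det M = 1.
Hypothesis hMa : map_mx (fun x : int => (x%:~R : R)) M *m a = alpha *: a.
Hypothesis hMB : MC *m B = B *m Rm.
Hypothesis hBinj : forall c : 'cV[C]_n.+1, B *m c = 0 -> c = 0.
Hypothesis hanot1 : alpha != 1.

Definition ta (v : 'cV[int]_N) : R := (a^T *m map_mx (fun x : int => (x%:~R : R)) v) 0 0.
Definition tb (v : 'cV[int]_N) : 'cV[C]_n.+1 := B^T *m map_mx (fun x : int => (x%:~R : C)) v.
Let RT := Rm^T.

Lemma ta_add u v : ta (u + v) = ta u + ta v.
Proof. by rewrite /ta map_mxD mulmxDr mxE. Qed.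
Lemma tb_add u v : tb (u + v) = tb u + tb v.
Proof. by rewrite /tb map_mxD mulmxDr. Qed.
Lemma ta0 : ta 0 = 0.
Proof. by rewrite /ta map_mx0 mulmx0 mxE. Qed.
Lemma tb0 : tb 0 = 0.
Proof. by rewrite /tb map_mx0 mulmx0. Qed.

Lemma ta_M v : ta (M^T *m v) = alpha * ta v.
Proof.
rewrite /ta map_mxM -map_trmx mulmxA -trmx_mul hMa.
by rewrite linearZ /= -scalemxAl mxE.
Qed.

Lemma tb_M v : tb (M^T *m v) = RT *m tb v.
Proof.
rewrite /tb map_mxM -map_trmx mulmxA -trmx_mul -/MC hMB.
by rewrite trmx_mul mulmxA.
Qed.


Lemma MT_unit : M^T \is a GRing.unit.
Proof. by rewrite -[_ \is a _]/(M^T \in unitmx) unitmxE det_tr hdet unitr1. Qed.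

Lemma alpha_unit : alpha \is a GRing.unit.
Proof. by rewrite unitfE gt_eqF. Qed.

Lemma MC_unit : MC \in unitmx.
Proof.
rewrite unitmxE unitfE /MC.
have -> : \det (map_mx (fun x : int => (x%:~R : C)) M) = (\det M)%:~R.
  by rewrite det_map_mx.
by rewrite hdet oner_eq0.
Qed.

Lemma RT_unit : RT \is a GRing.unit.
Proof.
rewrite -[_ \is a _]/(RT \in unitmx) -row_free_unit -kermx_eq0.
apply/rowV0P => x /sub_kermxP hx.
have h1 : Rm *m x^T = 0 by rewrite -[Rm]trmxK -trmx_mul hx trmx0.
have h2 : MC *m (B *m x^T) = 0 by rewrite mulmxA hMB -mulmxA h1 mulmx0.
have h3 : B *m x^T = 0 by rewrite -(mulKmx MC_unit (B *m x^T)) h2 mulmx0.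
by rewrite -[x]trmxK (hBinj h3) trmx0.
Qed.

Lemma ta_Minv u : ta (M^T^-1 *m u) = alpha^-1 * ta u.
Proof.
have h : ta u = alpha * ta (M^T^-1 *m u).
  by rewrite -ta_M mulmxA mulmxE mulrV ?MT_unit // mul1mx.
by rewrite h mulKf // gt_eqF.
Qed.

Lemma tb_Minv u : tb (M^T^-1 *m u) = RT^-1 *m tb u.
Proof.
have h : tb u = RT *m tb (M^T^-1 *m u).
  by rewrite -tb_M mulmxA mulmxE mulrV ?MT_unit // mul1mx.
by rewrite h mulmxA mulmxE mulVr ?RT_unit // mul1mx.
Qed.

Lemma ta_pow k v : ta ((M^T ^ k) *m v) = alpha ^ k * ta v.
Proof.
elim/int_ind: k v => [|k IH|k IH] v.
- by rewrite !expr0z mul1mx mul1r.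
- rewrite intS !exprzDr ?MT_unit ?alpha_unit // !expr1z -mulmxE -mulmxA.
  by rewrite ta_M IH mulrA.
- rewrite intS opprD !exprzDr ?MT_unit ?alpha_unit // !exprN1 -mulmxE -mulmxA.
  by rewrite ta_Minv IH mulrA.
Qed.

Lemma tb_pow k v : tb ((M^T ^ k) *m v) = (RT ^ k) *m tb v.
Proof.
elim/int_ind: k v => [|k IH|k IH] v.
- by rewrite !expr0z !mul1mx.
- rewrite intS !exprzDr ?MT_unit ?RT_unit // !expr1z -!mulmxE -!mulmxA.
  by rewrite tb_M IH.
- rewrite intS opprD !exprzDr ?MT_unit ?RT_unit // !exprN1 -!mulmxE -!mulmxA.
  by rewrite tb_Minv IH.
Qed.

Lemma Im_aff (r s : R) (w : C) : complex.Im (r%:C * w + s%:C) = r * complex.Im w.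
Proof. by case: w => x y /=; rewrite !mul0r !addr0. Qed.

Lemma Re_aff (r s : R) (w : C) : complex.Re (r%:C * w + s%:C) = r * complex.Re w + s.
Proof. by case: w => x y /=; rewrite !mul0r subr0. Qed.

Lemma Phi_proof (x : int * 'cV[int]_N) (p : HC R n.+1) :
  0 < complex.Im (((alpha ^ x.1)%:C * (val p).1 + (ta x.2)%:C,
                   (RT ^ x.1) *m (val p).2 + tb x.2).1).
Proof. by rewrite /= Im_aff mulr_gt0 ?exprz_gt0 //; case: p. Qed.

Definition Phi (x : int * 'cV[int]_N) (p : HC R n.+1) : HC R n.+1 :=
  exist _ ((alpha ^ x.1)%:C * (val p).1 + (ta x.2)%:C,
           (RT ^ x.1) *m (val p).2 + tb x.2) (Phi_proof x p).

Lemma Phi_hom x y : Phi (sdp_mul M x y) = Phi x \o Phi y.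
Proof.
case: x => k v; case: y => l w; apply: functional_extensionality => p.
apply: val_inj => /=; congr pair.
  rewrite ta_add ta_pow exprzDr ?alpha_unit // !rmorphD !rmorphM /=; ring.
rewrite tb_add tb_pow exprzDr ?RT_unit // -mulmxE mulmxDr !mulmxA.
by rewrite addrA addrAC.
Qed.

Lemma Phi_id : Phi (0, 0) = id.
Proof.
apply: functional_extensionality => p; apply: val_inj => /=.
rewrite !expr0z ta0 tb0 rmorph1 mul1r mul1mx !addr0.
by case: (val p).
Qed.

Lemma ta_sub u v : ta (u - v) = ta u - ta v.
Proof. by rewrite /ta map_mxB mulmxBr !mxE. Qed.
Lemma tb_sub u v : tb (u - v) = tb u - tb v.
Proof. by rewrite /tb map_mxB mulmxBr. Qed.

Lemma alpha_pow_inj k l : alpha ^ k = alpha ^ l -> k = l.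
Proof.
move=> h.
have h1 : alpha ^ (k - l) = 1.
  by rewrite exprzDr ?alpha_unit // h -exprzDr ?alpha_unit // subrr expr0z.
apply/subr0_eq; move: h1; case: (k - l) => m /= h2.
  by move/eqP: h2; rewrite pexprn_eq1 ?ltW // (negbTE hanot1) orbF => /eqP ->.
by move/eqP: h2; rewrite invr_eq1 pexprn_eq1 ?ltW // (negbTE hanot1).
Qed.

Lemma i_proof : 0 < complex.Im (((Complex (0:R) 1), (0 : 'cV[C]_n.+1)).1).
Proof. by rewrite /= ltr01. Qed.

Lemma Phi_inj : (forall d, ta d = 0 -> tb d = 0 -> d = 0) -> injective Phi.
Proof.
move=> hkey [k v] [l w] h.
pose p : HC R n.+1 := exist _ (Complex (0:R) 1, 0) i_proof.
have := congr1 (fun f => val (f p)) h => /= -[e1 e2 e3].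
have ekl : k = l.
  by apply: alpha_pow_inj; move: e2; rewrite !mulr1 !mul0r !addr0.
subst l.
have eta : ta v = ta w by move: e1; rewrite !mulr0 !mul0r !subr0 !add0r.
have etb : tb v = tb w by move: e3; rewrite !mulmx0 !add0r.
have := hkey (v - w); rewrite ta_sub tb_sub eta etb !subrr => /(_ erefl erefl).
by move/subr0_eq ->.
Qed.


Lemma gen_comp (T : Type) (S : (T -> T) -> Prop) f h :
  gen_group S f -> gen_group S h -> gen_group S (f \o h).
Proof.
move=> hf hh; elim: hf => [|g f' Sg _ IH|g h' f' Sg c1 c2 _ IH] //.
  exact: gen_mul Sg IH.
exact: gen_inv Sg c1 c2 IH.
Qed.

Lemma Phi_cancel x y : sdp_mul M x y = (0, 0) -> cancel (Phi y) (Phi x).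
Proof.
move=> h p; have := congr1 (fun f => f p) (Phi_hom x y).
by rewrite h Phi_id => e; exact: (esym e).
Qed.

Lemma Phi_g0 : Phi (1, 0) = g_scale halpha RT.
Proof.
apply: functional_extensionality => p; apply: val_inj => /=.
by rewrite !expr1z ta0 tb0 rmorph0 !addr0.
Qed.

Lemma Phi_gk k : Phi (0, delta_mx k 0) = g_transl (a k 0) (row k B)^T.
Proof.
apply: functional_extensionality => p; apply: val_inj => /=.
rewrite !expr0z rmorph1 mul1r mul1mx /ta /tb !map_delta_mx -!colE.
by rewrite !mxE tr_row.
Qed.

Let S := fun f : HC R n.+1 -> HC R n.+1 =>
  f = g_scale halpha RT \/ exists k, f = g_transl (a k 0) (row k B)^T.

Lemma sdp_inv1 : sdp_mul M (1, 0) (-1, 0) = (0, 0).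
Proof. by rewrite /sdp_mul /= subrr mulmx0 addr0. Qed.
Lemma sdp_inv1' : sdp_mul M (-1, 0) (1, 0) = (0, 0).
Proof. by rewrite /sdp_mul /= addNr mulmx0 addr0. Qed.
Lemma sdp_invk (e : 'cV[int]_N) : sdp_mul M (0, e) (0, - e) = (0, 0).
Proof. by rewrite /sdp_mul /= addr0 expr0z mul1mx subrr. Qed.
Lemma sdp_invk' (e : 'cV[int]_N) : sdp_mul M (0, - e) (0, e) = (0, 0).
Proof. by rewrite /sdp_mul /= addr0 expr0z mul1mx addNr. Qed.

Lemma Phi_mem x : gen_group S (Phi x).
Proof.
have P00 : gen_group S (Phi (0, 0)) by rewrite Phi_id; exact: gen_id.
have Pmul : forall x y, gen_group S (Phi x) -> gen_group S (Phi y) ->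
    gen_group S (Phi (sdp_mul M x y)).
  by move=> x' y' hx hy; rewrite Phi_hom; exact: gen_comp.
have P1 : gen_group S (Phi (1, 0)).
  by rewrite Phi_g0; exact: (gen_mul (or_introl erefl) (gen_id _)).
have Pm1 : gen_group S (Phi (-1, 0)).
  have Sg : S (Phi (1, 0)) by left; exact: Phi_g0.
  exact: (gen_inv Sg (Phi_cancel sdp_inv1') (Phi_cancel sdp_inv1) (gen_id _)).
have Pe : forall k, gen_group S (Phi (0, delta_mx k 0)).
  move=> k; have Sg : S (Phi (0, delta_mx k 0)) by right; exists k; exact: Phi_gk.
  exact: (gen_mul Sg (gen_id _)).
have Pme : forall k, gen_group S (Phi (0, - delta_mx k 0)).
  move=> k; have Sg : S (Phi (0, delta_mx k 0)) by right; exists k; exact: Phi_gk.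
  exact: (gen_inv Sg (Phi_cancel (sdp_invk' _)) (Phi_cancel (sdp_invk _)) (gen_id _)).
have Pk : forall k : int, gen_group S (Phi (k, 0)).
  elim/int_ind => [|k IH|k IH] //.
    have -> : ((k.+1 : int), (0 : 'cV[int]_N)) = sdp_mul M (1, 0) ((k : int), 0).
      by rewrite /sdp_mul /= mulmx0 addr0 intS.
    exact: Pmul.
  have -> : (- (k.+1 : int), (0 : 'cV[int]_N)) = sdp_mul M (-1, 0) (- (k : int), 0).
    by rewrite /sdp_mul /= mulmx0 addr0 intS opprD.
  exact: Pmul.
have Padd : forall u w, gen_group S (Phi (0, u)) -> gen_group S (Phi (0, w)) ->
    gen_group S (Phi (0, u + w)).
  move=> u w hu hw.
  have -> : ((0 : int), u + w) = sdp_mul M (0, u) (0, w).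
    by rewrite /sdp_mul /= addr0 expr0z mul1mx.
  exact: Pmul.
have Pc : forall (c : int) k, gen_group S (Phi (0, c *: delta_mx k 0)).
  move=> c k; elim/int_ind: c => [|c IH|c IH].
  - by rewrite scale0r.
  - by rewrite intS scalerDl scale1r; apply: Padd.
  - by rewrite intS opprD scalerDl scaleN1r; apply: Padd.
have Pv : forall v, gen_group S (Phi (0, v)).
  move=> v; rewrite [v]matrix_sum_delta.
  apply: (big_ind (fun w => gen_group S (Phi (0, w)))) => // i _.
  rewrite big_ord1; exact: Pc.
case: x => k v.
have -> : (k, v) = sdp_mul M (0, v) (k, 0).
  by rewrite /sdp_mul /= add0r mulmx0 addr0.
exact: Pmul.
Qed.


Lemma Phi_surj f : gen_group S f -> exists x, Phi x = f.
Proof.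
elim => [|g f' Sg _ [x <-]|g h f' Sg c1 c2 _ [x <-]].
- by exists (0, 0); exact: Phi_id.
- case: Sg => [->|[k ->]].
    by exists (sdp_mul M (1, 0) x); rewrite Phi_hom Phi_g0.
  by exists (sdp_mul M (0, delta_mx k 0) x); rewrite Phi_hom Phi_gk.
- have key : forall y yi, Phi y = g -> sdp_mul M y yi = (0, 0) ->
      exists z, Phi z = h \o Phi x.
    move=> y yi hy hyi; exists (sdp_mul M yi x); rewrite Phi_hom.
    have -> : h = Phi yi; last by [].
    apply: functional_extensionality => p.
    have := Phi_cancel hyi p; rewrite hy => e.
    by rewrite -{1}e c1.
  case: Sg => [e|[k e]].
    by apply: (key (1, 0) (-1, 0)); [rewrite e Phi_g0 | exact: sdp_inv1].
  by apply: (key (0, delta_mx k 0) (0, - delta_mx k 0)); [rewrite e Phi_gk | exact: sdp_invk].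
Qed.

End Group.

Theorem proposition2p4 (R : realType) (n : nat)
  (M : 'M[int]_(n.*2.+1))
  (alpha : R) (a : 'cV[R]_(n.*2.+1))
  (B : 'M[R[i]]_(n.*2.+1, n)) (Rm : 'M[R[i]]_n)
  (halpha : 0 < alpha) :
  (0 < n)%N ->
  \det M = 1 ->
  (* eigenvalue hypotheses, on the characteristic polynomial of M over C *)
  let chiM := char_poly (map_mx (fun x : int => (x%:~R : R[i])) M) in
  root chiM (alpha%:C) ->
  (forall z : R[i], root chiM z -> complex.Im z = 0 -> z = alpha%:C) ->
  alpha != 1 ->
  mup (alpha%:C) chiM = 1%N ->
  (* a is a real eigenvector of M for alpha *)
  a != 0 ->
  map_mx (fun x : int => (x%:~R : R)) M *m a = alpha *: a ->
  (* the columns b_1..b_n of B form a basis of W *)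
  (forall j : 'I_n,
      in_W (map_mx (fun x : int => (x%:~R : R[i])) M) (col j B)) ->
  (forall c : 'cV[R[i]]_n, B *m c = 0 -> c = 0) ->
  (forall v : 'cV[R[i]]_(n.*2.+1),
      in_W (map_mx (fun x : int => (x%:~R : R[i])) M) v ->
      exists c : 'cV[R[i]]_n, v = B *m c) ->
  (* M b_j = sum_l r_{lj} b_l *)
  map_mx (fun x : int => (x%:~R : R[i])) M *m B = B *m Rm ->
  (* G_M and the isomorphism with Z |x Z^(2n+1) *)
  let g0 := g_scale halpha Rm^T in
  let g (k : 'I_(n.*2.+1)) := g_transl (a k 0) (row k B)^T in
  let G_M := gen_group (fun f => f = g0 \/ exists k, f = g k) in
  exists phi : int * 'cV[int]_(n.*2.+1) -> (HC R n -> HC R n),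
    [/\ forall x, G_M (phi x),
        forall f, G_M f -> exists x, phi x = f,
        injective phi
      & forall x y, phi (sdp_mul M x y) = phi x \o phi y].
Proof.
case: n M a B Rm => [|n] M a B Rm; first by [].
move=> _ hdet chiM hroot hreal hne1 hmup ha0 hMa hBW hBinj hWB hMB g0 g G_M.
pose aC := map_mx (real_complex R) a.
have haC : aC != 0 by rewrite map_mx_eq0.
have eM : map_mx (real_complex R) (map_mx (fun x : int => (x%:~R : R)) M)
          = map_mx (fun x : int => (x%:~R : R[i])) M.
  by apply/matrixP => i j; rewrite !mxE rmorph_int.
have hMaC : map_mx (fun x : int => (x%:~R : R[i])) M *m aC = alpha%:C *: aC.
  by rewrite /aC -eM -map_mxM hMa map_mxZ.
have hkey : forall d, ta a d = 0 -> tb B d = 0 -> d = 0.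
  move=> d hta htb.
  pose dC := map_mx (fun x : int => (x%:~R : R[i])) d.
  have hdC : map_mx (@conjc R) dC = dC.
    by apply/matrixP => i j; rewrite !mxE rmorph_int.
  have haT : aC^T *m dC = 0.
    have -> : aC^T *m dC = map_mx (real_complex R)
        (a^T *m map_mx (fun x : int => (x%:~R : R)) d).
      rewrite map_mxM map_trmx; congr (_ *m _).
      by apply/matrixP => i j; rewrite !mxE rmorph_int.
    apply/matrixP => i j; rewrite !ord1 mxE.
    by rewrite /ta in hta; rewrite hta rmorph0 mxE.
  have := key hreal haC hMaC hBW hBinj hWB hdC haT htb.
  move/matrixP => h; apply/matrixP => i j; move: (h i j); rewrite !mxE => /eqP.
  by rewrite intr_eq0; move/eqP.
exists (@Phi R n alpha a B Rm halpha).
split.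
- exact: (Phi_mem halpha hdet hMa hMB hBinj).
- move=> f hf; exact: (Phi_surj hdet hMa hMB hBinj hf).
- exact: (Phi_inj hne1 hkey).
- exact: (Phi_hom halpha hdet hMa hMB hBinj).
Qed.
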